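(* With notation as in the context (type $E_7$), for every $s\in\{1,3,4,5,6,7\}$: (1) $\Gamma_s^+=\mathcal{L}(z_s)\cap\bigcap_{t\in T,\ s<t\le 7}\mathcal{L}^c(z_t)$; (2) $\Gamma_s^+\oplus z_s=\mathcal{L}(z_7)\cap\bigcap_{t\in T,\ s\le t<7}\mathcal{L}^c(z_t)$, where $T=\{1,3,4,5,6,7\}$ and $\Gamma_s^+\oplus z_s=\{x\oplus z_s: x\in\Gamma_s^+\}$ (empty intersections are omitted).
   Context: Let $F=\{0,1,2,3\}$ be the group $\mathbb{Z}/2\times\mathbb{Z}/2$ with operation $\oplus$ (binary addition without carry) and symplectic form $(a|a')=0$ if $a=0$, $a'=0$ or $a=a'$, and $1$ otherwise. Let $V=F^3$ (elements written $abc$), with coordinatewise $\oplus$ and form $(abc|a'b'c')=(a|a')+(b|b')+(c|c')\in\mathbb{Z}/2$. The T-graph is the graph with vertex set $V$ in which $abc$ and $a'b'c'$ are adjacent iff exactly one of $a=a'$, $b=b'$, $c=c'$ holds. For $v\in V$, $\mathcal{L}(v)$ is the set of vertices adjacent to $v$ in the T-graph, and $\mathcal{L}^c(v)$ is the set of vertices other than $v$ not adjacent to $v$. Let $\Delta$ be the $E_7$ root system with simple roots $\alpha_1,\dots,\alpha_7$, $\langle\alpha_i,\alpha_i\rangle=2$, $\langle\alpha_i,\alpha_j\rangle=-1$ for $\{i,j\}\in\{\{1,3\},\{3,4\},\{4,5\},\{5,6\},\{6,7\},\{2,4\}\}$, $0$ otherwise; $\Lambda=\bigoplus\mathbb{Z}\alpha_i$,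 $\Delta^+$ the positive roots. Let $f:\Lambda\to V$ be the homomorphism with $f(\alpha_1)=100$, $f(\alpha_2)=030$, $f(\alpha_3)=300$, $f(\alpha_4)=111$, $f(\alpha_5)=003$, $f(\alpha_6)=001$, $f(\alpha_7)=033$. For $\beta=\sum\beta^i\alpha_i\in\Delta^+$ let $m(\beta)=\max\{i:\beta^i\ne0\}$; set $\Delta_1^+=\{\alpha_1\}$, $\Delta_3^+=\{\beta: m(\beta)\in\{2,3\}\}$, $\Delta_s^+=\{\beta: m(\beta)=s\}$ for $s=4,\dots,7$, and $\Gamma_s^+=f(\Delta_s^+)$. For $s\in\{1,3,4,5,6,7\}$ let $s'=\max\{3,s+1\}$, $\zeta_s=\sum_{i=s'}^{7}\alpha_i$ (so $\zeta_7=0$), and $z_s=f(\zeta_s)$. *)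

(* Defs.v *)
From mathcomp Require Import all_boot all_order all_algebra.
Set Implicit Arguments. Unset Strict Implicit. Unset Printing Implicit Defensive.
Import Order.TTheory GRing.Theory Num.Theory.

(* F = Z/2 x Z/2 encoded as {0,1,2,3}; (+) is binary addition without carry *)
Definition F := 'I_4.
Definition xorF (a b : F) : F := inord (Nat.lxor a b).

(* symplectic form on F (recorded for completeness; not used by the statement) *)
Definition formF (a a' : F) : bool :=
  ~~ [|| (a == 0 :> nat), (a' == 0 :> nat) | a == a'].

(* V = F^3, element abc written (a, b, c) *)
Definition V := (F * F * F)%type.
Definition mkV (a b c : nat) : V := (inord a, inord b, inord c).
Definition xorV (v w : V) : V :=
  (xorF v.1.1 w.1.1, xorF v.1.2 w.1.2, xorF v.2 w.2).
Definition zeroV : V := mkV 0 0 0.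
Definition formV (v w : V) : bool :=
  formF v.1.1 w.1.1 (+) formF v.1.2 w.1.2 (+) formF v.2 w.2.

Definition Tadj (v w : V) : bool :=
  ((v.1.1 == w.1.1) + (v.1.2 == w.1.2) + (v.2 == w.2) == 1)%N.

Definition Lset (v : V) : {set V} := [set w | Tadj v w].
Definition Lcset (v : V) : {set V} := [set w | (w != v) && ~~ Tadj v w].

(* E7 Cartan (Gram) matrix on simple roots alpha_1..alpha_7 (1-based) *)
Definition e7edge (i j : nat) : bool :=
  (i, j) \in [:: (1,3); (3,4); (4,5); (5,6); (6,7); (2,4);
               (3,1); (4,3); (5,4); (6,5); (7,6); (4,2)]%N.
Definition cartan (i j : nat) : int :=
  if i == j then Posz 2 else if e7edge i j then Negz 0 else Posz 0.

(* Lambda = Z^7 : coefficient vectors; beta (i : 'I_7) is the coefficient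
   beta^{i+1} of alpha_{i+1} *)
Definition Lam := {ffun 'I_7 -> int}.
Definition coef (b : Lam) (i : nat) : int :=
  if (0 < i <= 7)%N then b (inord i.-1) else Posz 0.

Definition form (b c : Lam) : int :=
  (\sum_(i < 7) \sum_(j < 7) b i * c j * cartan i.+1 j.+1)%R.

Definition isRoot (b : Lam) : Prop := form b b = Posz 2.
Definition isPosRoot (b : Lam) : Prop := isRoot b /\ forall i, (0 <= b i)%R.

Definition fsimple (i : nat) : V :=
  match i with
  | 1 => mkV 1 0 0 | 2 => mkV 0 3 0 | 3 => mkV 3 0 0 | 4 => mkV 1 1 1
  | 5 => mkV 0 0 3 | 6 => mkV 0 0 1 | 7 => mkV 0 3 3 | _ => zeroV
  end%N.
(* since V has exponent 2, f(sum b^i alpha_i) = xor of f(alpha_i) over odd b^i *)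
Definition fhom (b : Lam) : V :=
  foldr (fun i acc => if odd `|coef b i|%N then xorV (fsimple i) acc else acc)
        zeroV (iota 1 7).

Definition mroot (b : Lam) : nat := \max_(i < 8 | coef b i != Posz 0) i.

Definition alpha1 : Lam := [ffun i : 'I_7 => if val i == 0%N then Posz 1 else Posz 0].
Definition DeltaPos (s : nat) (b : Lam) : Prop :=
  isPosRoot b /\
  (if s == 1%N then b == alpha1
   else if s == 3%N then mroot b \in [:: 2; 3]%N
   else mroot b == s).

Definition Gamma (s : nat) (x : V) : Prop := exists b, DeltaPos s b /\ fhom b = x.

Definition sprime (s : nat) : nat := maxn 3 s.+1.
Definition zeta (s : nat) : Lam :=
  [ffun i : 'I_7 => if (sprime s <= i.+1)%N then Posz 1 else Posz 0].
Definition z (s : nat) : V := fhom (zeta s).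

Definition Tidx : seq nat := [:: 1; 3; 4; 5; 6; 7]%N.

(* Main.v *)
Require Import Defs.
From mathcomp Require Import all_boot all_order all_algebra.
Import Order.TTheory GRing.Theory Num.Theory.

Definition bb (b : Lam) (k : nat) : int := b (inord k).
Definition vec (b : Lam) : seq int := [seq bb b k | k <- iota 0 7].
Definition mkb (v : seq int) : Lam := [ffun i : 'I_7 => nth 0%R v i].

From mathcomp Require Import zify ring.
Local Open Scope ring_scope.

Definition Qi (x0 x1 x2 x3 x4 x5 x6 : int) : int :=
  2*(x0*x0 + x1*x1 + x2*x2 + x3*x3 + x4*x4 + x5*x5 + x6*x6)
  - 2*(x0*x2 + x2*x3 + x3*x4 + x4*x5 + x5*x6 + x1*x3).
Definition Qs (v : seq int) : int :=
  Qi (nth 0 v 0) (nth 0 v 1) (nth 0 v 2) (nth 0 v 3) (nth 0 v 4) (nth 0 v 5) (nth 0 v 6).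
Definition fvs (v : seq int) : V :=
  foldr (fun i acc => if odd (absz (nth (0:int) v i.-1)) then xorV (fsimple i) acc else acc)
        zeroV (iota 1 7).
Definition mroots (v : seq int) : nat :=
  foldl maxn 0%N [seq (if k == 0%N then 0%N else if nth 0 v k.-1 != 0 then k else 0%N) | k <- iota 0 8].
Definition conds (s : nat) (v : seq int) : bool :=
  if s == 1%N then v == [:: 1; 0; 0; 0; 0; 0; 0]
  else if s == 3%N then mroots v \in [:: 2; 3]%N
  else mroots v == s.
Fixpoint boxr (ms : seq nat) : seq (seq nat) :=
  if ms is m :: ms' then [seq a :: l | a <- iota 0 m.+1, l <- boxr ms'] else [:: [::]].
Definition box : seq (seq int) := map (map Posz) (boxr [:: 2; 2; 3; 4; 3; 2; 1]%N).
Definition GammaB (s : nat) : seq V :=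
  [seq fvs v | v <- box & (Qs v == 2) && conds s v].

Lemma formE (b : Lam) : Defs.form b b = Qs (vec b).
Proof.
rewrite /Defs.form /Qs /Qi /vec /=.
rewrite !big_ord_recr !big_ord0 /=.
rewrite /cartan /e7edge /=.
have e : forall k (H : (k < 7)%N), fun_of_fin b (Ordinal H) = bb b k.
  by move=> k H; rewrite /bb; congr (fun_of_fin b _); apply: val_inj; rewrite /= inordK.
rewrite !e.
move: (bb b 0) (bb b 1) (bb b 2) (bb b 3) (bb b 4) (bb b 5) (bb b 6) => a0 a1 a2 a3 a4 a5 a6.
ring.
Qed.

Lemma psd x0 x1 x2 x3 x4 x5 x6 : 0 <= Qi x0 x1 x2 x3 x4 x5 x6.
Proof.
have h : 60 * Qi x0 x1 x2 x3 x4 x5 x6 =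
  30*(2*x0-x2)^+2 + 30*(2*x1-x3)^+2 + 10*(3*x2-2*x3)^+2 + 2*(5*x3-6*x4)^+2
  + 3*(4*x4-5*x5)^+2 + 5*(3*x5-4*x6)^+2 + 40*x6^+2 by rewrite /Qi; ring.
have : 0 <= 60 * Qi x0 x1 x2 x3 x4 x5 x6.
  rewrite h; repeat apply: addr_ge0; apply: mulr_ge0 => //; apply: sqr_ge0.
by rewrite pmulr_rge0.
Qed.

Lemma bnd0 x0 x1 x2 x3 x4 x5 x6 : Qi x0 x1 x2 x3 x4 x5 x6 = 2 -> 0 <= x0 -> x0 <= 2.
Proof.
move=> HQ h0.
have := psd (4*x0 - x0*4) (4*x1 - x0*4) (4*x2 - x0*6) (4*x3 - x0*8) (4*x4 - x0*6) (4*x5 - x0*4) (4*x6 - x0*2).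
have e : Qi (4*x0 - x0*4) (4*x1 - x0*4) (4*x2 - x0*6) (4*x3 - x0*8) (4*x4 - x0*6) (4*x5 - x0*4) (4*x6 - x0*2) = 16 * Qi x0 x1 x2 x3 x4 x5 x6 - 8 * x0^+2 by rewrite /Qi; ring.
rewrite e HQ => H.
nia.
Qed.

Lemma bnd1 x0 x1 x2 x3 x4 x5 x6 : Qi x0 x1 x2 x3 x4 x5 x6 = 2 -> 0 <= x1 -> x1 <= 2.
Proof.
move=> HQ h0.
have := psd (7*x0 - x1*4) (7*x1 - x1*7) (7*x2 - x1*8) (7*x3 - x1*12) (7*x4 - x1*9) (7*x5 - x1*6) (7*x6 - x1*3).
have e : Qi (7*x0 - x1*4) (7*x1 - x1*7) (7*x2 - x1*8) (7*x3 - x1*12) (7*x4 - x1*9) (7*x5 - x1*6) (7*x6 - x1*3) = 49 * Qi x0 x1 x2 x3 x4 x5 x6 - 14 * x1^+2 by rewrite /Qi; ring.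
rewrite e HQ => H.
nia.
Qed.

Lemma bnd2 x0 x1 x2 x3 x4 x5 x6 : Qi x0 x1 x2 x3 x4 x5 x6 = 2 -> 0 <= x2 -> x2 <= 3.
Proof.
move=> HQ h0.
have := psd (12*x0 - x2*6) (12*x1 - x2*8) (12*x2 - x2*12) (12*x3 - x2*16) (12*x4 - x2*12) (12*x5 - x2*8) (12*x6 - x2*4).
have e : Qi (12*x0 - x2*6) (12*x1 - x2*8) (12*x2 - x2*12) (12*x3 - x2*16) (12*x4 - x2*12) (12*x5 - x2*8) (12*x6 - x2*4) = 144 * Qi x0 x1 x2 x3 x4 x5 x6 - 24 * x2^+2 by rewrite /Qi; ring.
rewrite e HQ => H.
nia.
Qed.

Lemma bnd3 x0 x1 x2 x3 x4 x5 x6 : Qi x0 x1 x2 x3 x4 x5 x6 = 2 -> 0 <= x3 -> x3 <= 4.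
Proof.
move=> HQ h0.
have := psd (24*x0 - x3*8) (24*x1 - x3*12) (24*x2 - x3*16) (24*x3 - x3*24) (24*x4 - x3*18) (24*x5 - x3*12) (24*x6 - x3*6).
have e : Qi (24*x0 - x3*8) (24*x1 - x3*12) (24*x2 - x3*16) (24*x3 - x3*24) (24*x4 - x3*18) (24*x5 - x3*12) (24*x6 - x3*6) = 576 * Qi x0 x1 x2 x3 x4 x5 x6 - 48 * x3^+2 by rewrite /Qi; ring.
rewrite e HQ => H.
nia.
Qed.

Lemma bnd4 x0 x1 x2 x3 x4 x5 x6 : Qi x0 x1 x2 x3 x4 x5 x6 = 2 -> 0 <= x4 -> x4 <= 3.
Proof.
move=> HQ h0.
have := psd (15*x0 - x4*6) (15*x1 - x4*9) (15*x2 - x4*12) (15*x3 - x4*18) (15*x4 - x4*15) (15*x5 - x4*10) (15*x6 - x4*5).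
have e : Qi (15*x0 - x4*6) (15*x1 - x4*9) (15*x2 - x4*12) (15*x3 - x4*18) (15*x4 - x4*15) (15*x5 - x4*10) (15*x6 - x4*5) = 225 * Qi x0 x1 x2 x3 x4 x5 x6 - 30 * x4^+2 by rewrite /Qi; ring.
rewrite e HQ => H.
nia.
Qed.

Lemma bnd5 x0 x1 x2 x3 x4 x5 x6 : Qi x0 x1 x2 x3 x4 x5 x6 = 2 -> 0 <= x5 -> x5 <= 2.
Proof.
move=> HQ h0.
have := psd (8*x0 - x5*4) (8*x1 - x5*6) (8*x2 - x5*8) (8*x3 - x5*12) (8*x4 - x5*10) (8*x5 - x5*8) (8*x6 - x5*4).
have e : Qi (8*x0 - x5*4) (8*x1 - x5*6) (8*x2 - x5*8) (8*x3 - x5*12) (8*x4 - x5*10) (8*x5 - x5*8) (8*x6 - x5*4) = 64 * Qi x0 x1 x2 x3 x4 x5 x6 - 16 * x5^+2 by rewrite /Qi; ring.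
rewrite e HQ => H.
nia.
Qed.

Lemma bnd6 x0 x1 x2 x3 x4 x5 x6 : Qi x0 x1 x2 x3 x4 x5 x6 = 2 -> 0 <= x6 -> x6 <= 1.
Proof.
move=> HQ h0.
have := psd (3*x0 - x6*2) (3*x1 - x6*3) (3*x2 - x6*4) (3*x3 - x6*6) (3*x4 - x6*5) (3*x5 - x6*4) (3*x6 - x6*3).
have e : Qi (3*x0 - x6*2) (3*x1 - x6*3) (3*x2 - x6*4) (3*x3 - x6*6) (3*x4 - x6*5) (3*x5 - x6*4) (3*x6 - x6*3) = 9 * Qi x0 x1 x2 x3 x4 x5 x6 - 6 * x6^+2 by rewrite /Qi; ring.
rewrite e HQ => H.
nia.
Qed.

Lemma fhom_eq b : fhom b = fvs (vec b).
Proof. by []. Qed.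

Lemma mroot_eq b : mroot b = mroots (vec b).
Proof. by rewrite /mroot big_mkcond /= !big_ord_recr big_ord0. Qed.

Lemma alpha_eq b : (b == alpha1) = (vec b == [:: 1; 0; 0; 0; 0; 0; 0]).
Proof.
apply/eqP/eqP => [->|h].
  by rewrite /vec /bb /= !ffunE /= !inordK.
apply/ffunP => i.
have e : nth 0 (vec b) i = nth 0 [:: 1; 0; 0; 0; 0; 0; 0] i by rewrite h.
rewrite /vec (nth_map 0%N) ?size_iota // nth_iota // add0n /bb inord_val in e.
rewrite e ffunE; case: i {e} => [[|[|[|[|[|[|[|//]]]]]]] ?] //.
Qed.

Lemma vec_mkb v : size v = 7%N -> vec (mkb v) = v.
Proof.
do 7 (case: v => [|? v] //); case: v => // _.
by rewrite /vec /bb /= !ffunE !inordK.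
Qed.

Lemma mem_boxr ms l : size l = size ms -> all2 (fun a m => a <= m)%N l ms -> l \in boxr ms.
Proof.
elim: ms l => [|m ms IH] [|a l] //= [] hs /andP[ha hl].
change (a :: l \in boxr (m :: ms)); rewrite /boxr -/boxr.
apply/allpairsPdep; exists a, l; split=> //; first by rewrite mem_iota add0n ltnS ha.
exact: IH.
Qed.

Lemma rep b : isPosRoot b -> vec b \in box /\ Qs (vec b) = 2.
Proof.
case=> Hr Hn; rewrite /isRoot formE in Hr; split=> //.
have nn k : 0 <= bb b k by apply: Hn.
move: Hr; rewrite /Qs /vec /= => Hr.
have h0 := bnd0 _ _ _ _ _ _ _ Hr (nn 0%N); have h1 := bnd1 _ _ _ _ _ _ _ Hr (nn 1%N); have h2 := bnd2 _ _ _ _ _ _ _ Hr (nn 2%N).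
have h3 := bnd3 _ _ _ _ _ _ _ Hr (nn 3%N); have h4 := bnd4 _ _ _ _ _ _ _ Hr (nn 4%N); have h5 := bnd5 _ _ _ _ _ _ _ Hr (nn 5%N).
have h6 := bnd6 _ _ _ _ _ _ _ Hr (nn 6%N).
have ea k : bb b k = Posz `|bb b k|%N by rewrite gez0_abs.
rewrite (ea 0%N) (ea 1%N) (ea 2%N) (ea 3%N) (ea 4%N) (ea 5%N) (ea 6%N).
rewrite /box.
apply: (map_f (map Posz) (x := [:: `|bb b 0|%N; `|bb b 1|%N; `|bb b 2|%N; `|bb b 3|%N; `|bb b 4|%N; `|bb b 5|%N; `|bb b 6|%N])).
apply: mem_boxr => //=.
move: (nn 0%N) (nn 1%N) (nn 2%N) (nn 3%N) (nn 4%N) (nn 5%N) (nn 6%N) h0 h1 h2 h3 h4 h5 h6.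
move: (bb b 0) (bb b 1) (bb b 2) (bb b 3) (bb b 4) (bb b 5) (bb b 6) => a0 a1 a2 a3 a4 a5 a6.
move=> g0 g1 g2 g3 g4 g5 g6 k0 k1 k2 k3 k4 k5 k6.
by rewrite -!lez_nat !gez0_abs // k0 k1 k2 k3 k4 k5 k6.
Qed.

Lemma box_size : all (fun v => size v == 7%N) box.
Proof. by vm_compute. Qed.
Lemma box_nn : all (all (fun x : int => 0 <= x)) box.
Proof. by vm_compute. Qed.

Lemma gamma_iff s x : Gamma s x <-> x \in GammaB s.
Proof.
split.
  case=> b [[Hr Hc] <-].
  have [Hbox HQ] := rep _ Hr.
  rewrite fhom_eq; apply: map_f; rewrite mem_filter HQ eqxx Hbox andbT /=.
  by move: Hc; rewrite /conds mroot_eq alpha_eq.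
case/mapP => v; rewrite mem_filter => /andP[/andP[/eqP HQ Hc] Hv] ->.
have Hs : size v = 7%N by apply/eqP; exact: (allP box_size v Hv).
exists (mkb v); split; last by rewrite fhom_eq vec_mkb.
split; last by rewrite mroot_eq alpha_eq vec_mkb.
split; first by rewrite /isRoot formE vec_mkb.
move=> i; rewrite ffunE.
move: (allP box_nn v Hv) => /allP; apply; apply: mem_nth; by rewrite Hs ltn_ord.
Qed.

Definition Vn := (nat * nat * nat)%type.
Definition vals (x : V) : Vn := (val x.1.1, val x.1.2, val x.2).
Definition xorn (a b : Vn) : Vn :=
  (Nat.lxor a.1.1 b.1.1, Nat.lxor a.1.2 b.1.2, Nat.lxor a.2 b.2).
Definition fsn (i : nat) : Vn :=
  match i with
  | 1 => (1, 0, 0) | 2 => (0, 3, 0) | 3 => (3, 0, 0) | 4 => (1, 1, 1)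
  | 5 => (0, 0, 3) | 6 => (0, 0, 1) | 7 => (0, 3, 3) | _ => (0, 0, 0)
  end%N.
Definition fvn (v : seq int) : Vn :=
  foldr (fun i acc => if odd (absz (nth (0:int) v i.-1)) then xorn (fsn i) acc else acc)
        (0, 0, 0)%N (iota 1 7).
Definition Tadjn (v w : Vn) : bool :=
  ((v.1.1 == w.1.1) + (v.1.2 == w.1.2) + (v.2 == w.2) == 1)%N.
Definition zvec (t : nat) : seq int := [seq (if (sprime t <= k.+1)%N then 1 else 0 : int) | k <- iota 0 7].
Definition zsn (t : nat) : Vn := fvn (zvec t).
Definition GBn (s : nat) : seq Vn :=
  [seq fvn v | v <- box & (Qs v == 2) && conds s v].
Definition RHS1n s (y : Vn) := Tadjn (zsn s) y &&
  all (fun t => (s < t <= 7)%N ==> ((y != zsn t) && ~~ Tadjn (zsn t) y)) Tidx.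
Definition RHS2n s (y : Vn) := Tadjn (zsn 7) y &&
  all (fun t => (s <= t < 7)%N ==> ((y != zsn t) && ~~ Tadjn (zsn t) y)) Tidx.
Definition Vnl : seq Vn := [seq (p, c) | p <- [seq (a, b) | a <- iota 0 4, b <- iota 0 4], c <- iota 0 4].
Definition check := all (fun s => let G := GBn s in let G2 := [seq xorn y (zsn s) | y <- G] in
  all (fun y => ((y \in G) == RHS1n s y) && ((y \in G2) == RHS2n s y)) Vnl) Tidx.

Lemma checkP : check.
Proof. vm_compute. reflexivity. Qed.

Lemma vals_inj : injective vals.
Proof.
move=> [[a b] c] [[a' b'] c'] [] e1 e2 e3.
by rewrite (val_inj e1) (val_inj e2) (val_inj e3).
Qed.

Lemma val_xorF (a b : F) : val (xorF a b) = Nat.lxor a b.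
Proof.
rewrite /xorF /= inordK //.
by case: a => [[|[|[|[|//]]]] ?]; case: b => [[|[|[|[|//]]]] ?].
Qed.

Lemma vals_xor a b : vals (xorV a b) = xorn (vals a) (vals b).
Proof. by rewrite /vals /xorn /= !val_xorF. Qed.

Lemma vals_fsimple i : vals (fsimple i) = fsn i.
Proof.
by do 8 (case: i => [|i]; first by rewrite /vals /= !inordK); rewrite /vals /= !inordK.
Qed.

Lemma vals_fvs v : vals (fvs v) = fvn v.
Proof.
rewrite /fvs /fvn; elim: (iota 1 7) => [|i l IH] /=.
  by rewrite /vals /= !inordK.
by case: ifP => _; rewrite ?vals_xor IH ?vals_fsimple.
Qed.

Lemma vals_z t : vals (z t) = zsn t.
Proof.
rewrite /z fhom_eq /zsn -vals_fvs; congr (vals (fvs _)).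
rewrite /vec /zvec; apply/eq_in_map => k; rewrite mem_iota => /andP[_ hk].
by rewrite /bb ffunE inordK.
Qed.

Lemma Tadj_n a b : Tadj a b = Tadjn (vals a) (vals b).
Proof. by []. Qed.

Lemma vals_in x : vals x \in Vnl.
Proof.
case: x => [[a b] c]; rewrite /vals /=.
apply/allpairsPdep; exists (val a, val b), (val c); split=> //; last by rewrite mem_iota ltn_ord.
apply/allpairsPdep; exists (val a), (val b); split=> //; by rewrite mem_iota ltn_ord.
Qed.

Lemma mem_GB s x : (x \in GammaB s) = (vals x \in GBn s).
Proof.
rewrite /GBn /GammaB -(mem_map vals_inj) -map_comp.
by congr (_ \in _); apply: eq_map => v /=; rewrite vals_fvs.
Qed.

Lemma Lset_n t x : (x \in Lset (z t)) = Tadjn (zsn t) (vals x).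
Proof. by rewrite inE Tadj_n vals_z. Qed.

Lemma Lcset_n t x : (x \in Lcset (z t)) = (vals x != zsn t) && ~~ Tadjn (zsn t) (vals x).
Proof. by rewrite inE Tadj_n -vals_z (inj_eq vals_inj). Qed.

Theorem mainTheorem8 : forall s : nat, s \in Tidx ->
  (forall x : V,
     Gamma s x <->
     (x \in Lset (z s) /\
      forall t, t \in Tidx -> (s < t <= 7)%N -> x \in Lcset (z t))) /\
  (forall x : V,
     (exists y, Gamma s y /\ x = xorV y (z s)) <->
     (x \in Lset (z 7) /\
      forall t, t \in Tidx -> (s <= t < 7)%N -> x \in Lcset (z t))).
Proof.
move=> s Hs.
have Cs := allP checkP s Hs.
split=> x; have /andP[/eqP E1 /eqP E2] := allP Cs (vals x) (vals_in x).
  rewrite gamma_iff mem_GB E1 /RHS1n Lset_n.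
  split=> [/andP[h1 /allP h2]|[h1 h2]].
    split=> // t ht hst; rewrite Lcset_n.
    by have := h2 t ht; rewrite hst.
  rewrite h1 andTb; apply/allP => t ht; apply/implyP => hst.
  by rewrite -Lcset_n; apply: h2.
have -> : (exists y, Gamma s y /\ x = xorV y (z s)) <->
          (vals x \in [seq xorn y (zsn s) | y <- GBn s]).
  split.
    case=> y [/gamma_iff hy ->]; rewrite vals_xor vals_z.
    by apply: map_f; rewrite -mem_GB.
  case/mapP => w /mapP [v hv ->] hx.
  exists (fvs v); split.
    by apply/gamma_iff; apply: map_f.
  by apply: vals_inj; rewrite vals_xor vals_z vals_fvs.
rewrite E2 /RHS2n Lset_n.
split=> [/andP[h1 /allP h2]|[h1 h2]].
  split=> // t ht hst; rewrite Lcset_n.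
  by have := h2 t ht; rewrite hst.
rewrite h1 andTb; apply/allP => t ht; apply/implyP => hst.
by rewrite -Lcset_n; apply: h2.
Qed.
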